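(* Let $G$ be a group and $K$ a subgroup of $G$. The set $\mathrm{GCA}_K(A^G):=\{\mathcal{T}\in\mathrm{GCA}(A^G):\text{the minimal memory set of }\mathcal{T}\text{ is contained in }K\}$ is a submonoid of $\mathrm{GCA}(A^G)$ (under composition) if and only if $K$ is fully invariant, i.e. $\phi(K)\subseteq K$ for all $\phi\in\mathrm{End}(G)$.
   Context: $A$ is a finite set with $|A|\ge 2$. $A^G$ is the set of functions $G\to A$ with shift action $(g\cdot x)(k):=x(g^{-1}k)$. For $\phi\in\mathrm{End}(G)$, a $\phi$-cellular automaton is a map $\mathcal{T}:A^G\to A^G$ for which there exist a finite $T\subseteq G$ (memory set) and $\mu:A^T\to A$ with $\mathcal{T}(x)(h)=\mu((\phi(h^{-1})\cdot x)|_T)$ for all $x,h$. $\mathrm{GCA}(A^G)$ is the set of all $\phi$-cellular automata $A^G\to A^G$ over all $\phi\in\mathrm{End}(G)$; it is a monoid under composition (a composite of a $\phi$-CA with memory set $T$ after a $\psi$-CA with memory set $S$ is a $(\psi\circ\phi)$-CA with memory set $\psi(T)S$). The minimal memory set of $\mathcal{T}$ is the intersection of all its memory sets, which is itself a memory set. *)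

(* Defs.v *)
From Stdlib Require List.

From mathcomp Require Import all_boot.



Record group_on (G : Type) := GroupOn {
  gmul : G -> G -> G;
  gone : G;
  ginv : G -> G;
  gmulA : forall a b c, gmul a (gmul b c) = gmul (gmul a b) c;
  gmul1g : forall a, gmul gone a = a;
  gmulg1 : forall a, gmul a gone = a;
  gmulVg : forall a, gmul (ginv a) a = gone;
  gmulgV : forall a, gmul a (ginv a) = gone
}.

Section Defs.
Variables (G : Type) (grp : group_on G) (A : finType).

Local Notation "a * b" := (@gmul G grp a b).

Definition is_subgroup (K : G -> Prop) : Prop :=
  K (@gone G grp) /\ (forall a b, K a -> K b -> K (a * b)) /\
  (forall a, K a -> K (@ginv G grp a)).

Definition is_endo (phi : G -> G) : Prop :=
  forall a b, phi (a * b) = phi a * phi b.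

Definition shift (g : G) (x : G -> A) : G -> A :=
  fun k => x (@ginv G grp g * k).

Definition finite_set (S : G -> Prop) : Prop :=
  exists l : list G, forall g, S g -> List.In g l.

Definition restr (S : G -> Prop) (x : G -> A) : {g : G | S g} -> A :=
  fun s => x (proj1_sig s).

Definition phi_memory_set (phi : G -> G) (T : (G -> A) -> (G -> A))
    (S : G -> Prop) : Prop :=
  finite_set S /\
  exists mu : ({g : G | S g} -> A) -> A,
    forall x h, T x h = mu (restr S (shift (phi (@ginv G grp h)) x)).

Definition is_phiCA (phi : G -> G) (T : (G -> A) -> (G -> A)) : Prop :=
  exists S, phi_memory_set phi T S.

Definition is_GCA (T : (G -> A) -> (G -> A)) : Prop :=
  exists phi, is_endo phi /\ is_phiCA phi T.

Definition memory_set (T : (G -> A) -> (G -> A)) (S : G -> Prop) : Prop :=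
  exists phi, is_endo phi /\ phi_memory_set phi T S.

Definition min_memory_set (T : (G -> A) -> (G -> A)) : G -> Prop :=
  fun g => forall S, memory_set T S -> S g.

Definition GCA_K (K : G -> Prop) (T : (G -> A) -> (G -> A)) : Prop :=
  is_GCA T /\ (forall g, min_memory_set T g -> K g).

Definition is_GCA_submonoid (P : ((G -> A) -> (G -> A)) -> Prop) : Prop :=
  (forall T, P T -> is_GCA T) /\
  P (fun x => x) /\
  (forall T1 T2, P T1 -> P T2 -> P (fun x => T1 (T2 x))).

Definition fully_invariant (K : G -> Prop) : Prop :=
  forall phi, is_endo phi -> forall k, K k -> K (phi k).

End Defs.

(* Main.v *)
Require Import Defs.
From mathcomp Require Import all_boot.
From Stdlib Require Import ClassicalEpsilon FunctionalExtensionality List.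

#[local] Arguments gmul {G} g _ _.
#[local] Arguments gone {G} g.
#[local] Arguments ginv {G} g _.
#[local] Arguments gmulA {G} g a b c.
#[local] Arguments gmul1g {G} g a.
#[local] Arguments gmulg1 {G} g a.
#[local] Arguments gmulVg {G} g a.
#[local] Arguments gmulgV {G} g a.
#[local] Arguments is_endo {G} grp phi.
#[local] Arguments shift {G} grp {A} g x _.
#[local] Arguments restr {G A} S x _.
#[local] Arguments finite_set {G} S.
#[local] Arguments phi_memory_set {G} grp {A} phi T S.
#[local] Arguments memory_set {G} grp {A} T S.
#[local] Arguments min_memory_set {G} grp {A} T _.
#[local] Arguments is_GCA {G} grp {A} T.
#[local] Arguments GCA_K {G} grp {A} K T.

Local Notation mul := (@gmul _).
Local Notation one := (@gone _).
Local Notation inv := (@ginv _).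

Lemma inv_unique {G : Type} {grp : group_on G} {a b : G} :
  mul grp a b = one grp -> b = inv grp a.
Proof.
  intro H. rewrite -(gmul1g grp b) -(gmulVg grp a) -gmulA H gmulg1.
  reflexivity.
Qed.

Lemma inv_inv {G : Type} {grp : group_on G} {a : G} : inv grp (inv grp a) = a.
Proof. symmetry. apply inv_unique. apply gmulVg. Qed.

Lemma inv_one {G : Type} {grp : group_on G} : inv grp (one grp) = one grp.
Proof. symmetry. apply inv_unique. apply gmul1g. Qed.

Lemma inv_mul {G : Type} {grp : group_on G} {a b : G} :
  inv grp (mul grp a b) = mul grp (inv grp b) (inv grp a).
Proof.
  symmetry. apply inv_unique.
  rewrite gmulA -(gmulA grp a b) gmulgV gmulg1 gmulgV. reflexivity.
Qed.

Lemma endo_one {G : Type} {grp : group_on G} {phi : G -> G} :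
  is_endo grp phi -> phi (one grp) = one grp.
Proof.
  intro E. assert (H : phi (one grp) = mul grp (phi (one grp)) (phi (one grp))).
  { rewrite -E gmul1g. reflexivity. }
  transitivity (mul grp (mul grp (inv grp (phi (one grp))) (phi (one grp))) (phi (one grp))).
  - rewrite gmulVg gmul1g. reflexivity.
  - rewrite -gmulA -H gmulVg. reflexivity.
Qed.

Lemma endo_inv {G : Type} {grp : group_on G} {phi : G -> G} {a : G} :
  is_endo grp phi -> phi (inv grp a) = inv grp (phi a).
Proof.
  intro E. apply inv_unique. rewrite -E gmulgV. apply endo_one; auto.
Qed.

Lemma shift_one {G : Type} {grp : group_on G} {A : finType} {x : G -> A} :
  shift grp (one grp) x = x.
Proof.
  unfold shift. extensionality k. rewrite inv_one gmul1g. reflexivity.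
Qed.

Lemma shift_shift {G : Type} {grp : group_on G} {A : finType} {a b} {x : G -> A} :
  shift grp a (shift grp b x) = shift grp (mul grp a b) x.
Proof.
  unfold shift. extensionality k. rewrite inv_mul gmulA. reflexivity.
Qed.

Lemma char_fwd {G : Type} {grp : group_on G} {A : finType} {phi T S} :
  is_endo grp phi -> @phi_memory_set G grp A phi T S ->
  (forall x h, T x h = T (shift grp (phi (inv grp h)) x) (one grp)) /\
  (forall x y, (forall s, S s -> x s = y s) -> T x (one grp) = T y (one grp)).
Proof.
  intros E [_ [mu Hmu]]. split.
  - intros x h. rewrite !Hmu inv_one (endo_one E) shift_one; auto.
  - intros x y Hxy. rewrite !Hmu inv_one (endo_one E) !shift_one; auto.
    f_equal. extensionality s. destruct s as [s Hs]. unfold restr. simpl. auto.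
Qed.

Lemma char_bwd {G : Type} {grp : group_on G} {A : finType} (a0 : A) {phi T S} :
  finite_set S ->
  (forall x h, T x h = T (shift grp (phi (inv grp h)) x) (one grp)) ->
  (forall x y, (forall s, S s -> x s = y s) -> T x (one grp) = T y (one grp)) ->
  @phi_memory_set G grp A phi T S.
Proof.
  intros F Ha Hb. split; auto.
  exists (fun f => T (fun g => match excluded_middle_informative (S g) with
                               | left p => f (exist _ g p) | right _ => a0 end) (one grp)).
  intros x h. rewrite Ha. apply Hb. intros s Hs.
  destruct (excluded_middle_informative (S s)) as [p|n]; [|contradiction].
  unfold restr. reflexivity.
Qed.

Lemma inter_ms {G : Type} {grp : group_on G} {A : finType} (a0 : A) {phi phi' T S S'} :
  is_endo grp phi -> @phi_memory_set G grp A phi T S ->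
  is_endo grp phi' -> @phi_memory_set G grp A phi' T S' ->
  @phi_memory_set G grp A phi T (fun g => S g /\ S' g).
Proof.
  intros E HS E' HS'.
  destruct (char_fwd E HS) as [Ha Hb].
  destruct (char_fwd E' HS') as [_ Hb'].
  apply (char_bwd a0).
  - destruct HS as [[l Hl] _]. exists l. intros g [Hg _]. auto.
  - exact Ha.
  - intros x y Hxy.
    set (z := fun g => if excluded_middle_informative (S g) then x g else y g).
    transitivity (T z (one grp)).
    + apply Hb. intros s Hs. unfold z.
      destruct (excluded_middle_informative (S s)); [reflexivity|contradiction].
    + apply Hb'. intros s Hs. unfold z.
      destruct (excluded_middle_informative (S s)); simpl; auto.
Qed.

Lemma reduce {G : Type} {grp : group_on G} {A : finType} (a0 : A) {K : G -> Prop} {T} :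
  @is_GCA G grp A T -> (forall g, min_memory_set grp T g -> K g) ->
  exists phi S, is_endo grp phi /\ @phi_memory_set G grp A phi T S /\
                (forall g, S g -> K g).
Proof.
  intros [phi [E [S HS]]] Hmin.
  assert (Hgen : forall l', exists S', @phi_memory_set G grp A phi T S' /\
            (forall g, S' g -> S g) /\ (forall g, In g l' -> S' g -> K g)).
  { induction l' as [|a l' IH].
    - exists S. split; [auto|split; auto]. intros g [].
    - destruct IH as [S' [H1 [H2 H3]]].
      destruct (classic (K a)) as [Ka|nKa].
      + exists S'. split; [auto|split; auto]. intros g [<-|Hg] Hs; auto.
      + assert (exists S0, memory_set grp T S0 /\ ~ S0 a) as [S0 [[chi [Ec HS0]] nS0]].
        { apply NNPP. intro Hn. apply nKa, Hmin. intros S0 HS0.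
          apply NNPP. intro nS0. apply Hn. exists S0. auto. }
        exists (fun g => S' g /\ S0 g). split; [|split].
        * apply (inter_ms a0 E H1 Ec HS0).
        * intros g [Hg _]. auto.
        * intros g [<-|Hg] [Hs Hs0]; [contradiction|auto]. }
  destruct HS as [[l Hl] Hmu].
  destruct (Hgen l) as [S' [H1 [H2 H3]]].
  exists phi, S'. split; auto.
Qed.

Lemma comp_ms {G : Type} {grp : group_on G} {A : finType} (a0 : A) {phi psi T1 T2 S1 S2} :
  is_endo grp phi -> @phi_memory_set G grp A phi T1 S1 ->
  is_endo grp psi -> @phi_memory_set G grp A psi T2 S2 ->
  @phi_memory_set G grp A (fun g => psi (phi g)) (fun x => T1 (T2 x))
    (fun g => exists s1 s2, S1 s1 /\ S2 s2 /\ g = mul grp (psi s1) s2).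
Proof.
  intros E H1 E' H2.
  destruct (char_fwd E H1) as [Ha1 Hb1].
  destruct (char_fwd E' H2) as [Ha2 Hb2].
  assert (Eq : forall g x, shift grp g (T2 x) = T2 (shift grp (psi g) x)).
  { intros g x. extensionality k. unfold shift at 1.
    rewrite Ha2 (Ha2 _ k) shift_shift -E' inv_mul inv_inv. reflexivity. }
  apply (char_bwd a0).
  - destruct H1 as [[l1 F1] _]. destruct H2 as [[l2 F2] _].
    exists (flat_map (fun a => map (fun b => mul grp (psi a) b) l2) l1).
    intros g [s1 [s2 [Hs1 [Hs2 ->]]]]. apply in_flat_map. exists s1.
    split; auto. apply in_map. auto.
  - intros x h. rewrite Ha1 Eq. reflexivity.
  - intros x y Hxy. apply Hb1. intros s Hs. rewrite (Ha2 x) (Ha2 y).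
    apply Hb2. intros t Ht. unfold shift. rewrite (endo_inv E') inv_inv.
    apply Hxy. exists s, t. auto.
Qed.

Lemma id_ms {G : Type} (grp : group_on G) {A : finType} (a0 : A) :
  @phi_memory_set G grp A (fun g => g) (fun x => x) (fun g => g = one grp).
Proof.
  apply (char_bwd a0).
  - exists (one grp :: nil). intros g ->. left. auto.
  - intros x h. unfold shift. rewrite inv_inv gmulg1. reflexivity.
  - intros x y H. apply H. reflexivity.
Qed.

Theorem proposition2p8 (G : Type) (grp : group_on G) (A : finType)
    (hA : 1 < #|A|) (K : G -> Prop) (hK : @is_subgroup G grp K) :
  @is_GCA_submonoid G grp A (@GCA_K G grp A K) <-> @fully_invariant G grp K.
Proof.
  destruct (card_gt1P hA) as [a [b [_ _ nab]]].
  destruct hK as [K1 [KM KV]].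
  split.
  - intros [_ [_ Hcomp]] phi E k Hk.
    set (T1 := fun (x : G -> A) h => x (phi h)).
    set (T2 := fun (x : G -> A) h => x (mul grp h k)).
    assert (M1 : @phi_memory_set G grp A phi T1 (fun g => g = one grp)).
    { apply (char_bwd a).
      - exists (one grp :: nil). intros g ->. left. auto.
      - intros x h. unfold T1, shift.
        rewrite (endo_inv E) inv_inv (endo_one E) gmulg1. reflexivity.
      - intros x y H. unfold T1. rewrite (endo_one E); auto. }
    assert (M2 : @phi_memory_set G grp A (fun g => g) T2 (fun g => g = k)).
    { apply (char_bwd a).
      - exists (k :: nil). intros g ->. left. auto.
      - intros x h. unfold T2, shift. rewrite inv_inv gmul1g. reflexivity.
      - intros x y H. unfold T2. rewrite gmul1g. auto. }
    assert (G1 : GCA_K grp K T1).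
    { split. exists phi. split; auto. exists (fun g => g = one grp); auto.
      intros g Hg. assert (g = one grp) as -> by (apply Hg; exists phi; auto). auto. }
    assert (G2 : GCA_K grp K T2).
    { split. exists (fun g => g). split. intros ? ?; auto.
      exists (fun g => g = k); auto.
      intros g Hg. assert (g = k) as -> by (apply Hg; exists (fun g => g); split;
        [intros ? ?; auto | auto]). auto. }
    destruct (Hcomp _ _ G2 G1) as [_ Hmin]. apply Hmin.
    intros S [chi [Ec HS]]. apply NNPP. intro nS.
    destruct (char_fwd Ec HS) as [_ Hb].
    specialize (Hb (fun _ => a)
      (fun g => if excluded_middle_informative (g = phi k) then b else a)).
    unfold T1, T2 in Hb. rewrite gmul1g in Hb.
    assert (Hab : a = b).
    { rewrite Hb.
      - destruct (excluded_middle_informative (phi k = phi k)) as [p|n]; simpl;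
          [reflexivity|exfalso; apply n; reflexivity].
      - intros s Hs. destruct (excluded_middle_informative (s = phi k)) as [e|]; simpl;
          [subst; contradiction|reflexivity]. }
    rewrite Hab eqxx in nab. discriminate.
  - intros FI. split; [|split].
    + intros T [H _]. exact H.
    + split.
      * exists (fun g => g). split; [intros ? ?; auto|]. exists (fun g => g = one grp).
        apply (id_ms grp a).
      * intros g Hg. assert (g = one grp) as -> by
          (apply Hg; exists (fun g => g); split; [intros ? ?; auto|apply (id_ms grp a)]).
        auto.
    + intros T1 T2 H1 H2.
      destruct (reduce a (proj1 H1) (proj2 H1)) as [phi [S1 [E1 [M1 K1s]]]].
      destruct (reduce a (proj1 H2) (proj2 H2)) as [psi [S2 [E2 [M2 K2s]]]].
      pose proof (comp_ms a E1 M1 E2 M2) as M.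
      assert (Ec : is_endo grp (fun g => psi (phi g))).
      { intros x y. rewrite E1 E2. reflexivity. }
      split.
      * exists (fun g => psi (phi g)). split; auto. eexists; exact M.
      * intros g Hg. assert (HS := Hg _ (ex_intro _ _ (conj Ec M))).
        destruct HS as [s1 [s2 [Hs1 [Hs2 ->]]]]. apply KM; [apply (FI psi E2)|]; auto.
Qed.
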